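(* Fix a received sequence $\mathbf y=(y_1,\dots,y_n)$ and let $g^*$ be any minimizer of $\sum_{e\in\mathcal E} g(e)\,b(e)$ over $g\in\mathcal P_{\mathcal T}(H)$ (the output of the LP joint decoder). If $g^*$ is integral, i.e. $g^*\in\{0,1\}^{|\mathcal E|}$, then $g^*$ is the indicator vector of an edge-path $(e_1,\dots,e_n)$ whose input sequence $x_1^n=(x(e_1),\dots,x(e_n))$ is a codeword of $\mathcal C$, and the corresponding input/state pair $(x_1^n,s_1^{n+1})$, with $s_i=s(e_i)$ for $i\le n$ and $s_{n+1}=s'(e_n)$, maximizes $P(y_1^n,s_2^{n+1}\mid x_1^n,s_1)\,P(s_1)$ over all input/state sequence pairs $(x_1^n,s_1^{n+1})\in\{0,1\}^n\times\mathcal S^{n+1}$ with $x_1^n\in\mathcal C$ (i.e. $g^*$ is a joint maximum-likelihood edge-path).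
   Context: Let $\mathcal C\subseteq\{0,1\}^n$ be a binary linear code with parity-check matrix $H$, and let $\mathcal I$ be the collection of sets of column indices participating in each row (parity check) of $H$. For $I\in\mathcal I$ define the local codeword polytope $\mathrm{LCP}(I)=\bigcap_{S\subseteq I,\ |S|\text{ odd}}\{\mathbf f\in[0,1]^n:\sum_{i\in S}f_i-\sum_{i\in I\setminus S}f_i\le |S|-1\}$ and the relaxed polytope $\mathcal P(H)=\bigcap_{I\in\mathcal I}\mathrm{LCP}(I)$. A finite-state channel (FSC) with binary inputs $x\in\{0,1\}$, finite state set $\mathcal S$ and output alphabet $\mathcal Y$ is specified by transition probabilities (or densities in $y$) $P(y,s'\mid x,s)=\Pr(Y_i=y,S_{i+1}=s'\mid X_i=x,S_i=s)$, the same for all $i$, together with an initial state distribution $P(s_1)$; one writes $P(y_1^n,s_2^{n+1}\mid x_1^n,s_1)=\prod_{i=1}^nP(y_i,s_{i+1}\mid x_i,s_i)$. Trellis: given the received $\mathbf y$, the edge set $\mathcal E$ consists of the tuples $e=(i,s,s',x)$ with $i\in\{1,\dots,n\}$, $s,s'\in\mathcal S$, $x\in\{0,1\}$, such that $P(y_i,s'\mid x,s)>0$ (and additionally $P(s)>0$ if $i=1$); write $t(e)=i$, $s(e)=s$, $s'(e)=s'$, $x(e)=x$. The branch metric is $b(e)=-\ln P(y_{t(e)},s'(e)\mid x(e),s(e))$ if $t(e)>1$ and $b(e)=-\ln\big(P(y_1,s'(e)\mid x(e),s(e))P(s(e))\big)$ if $t(e)=1$. An edge-path is a sequence $(e_1,\dots,e_n)$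 of edges with $t(e_i)=i$ and $s'(e_i)=s(e_{i+1})$; it is identified with its indicator vector in $\{0,1\}^{|\mathcal E|}$. The trellis polytope $\mathcal T$ is the set of $g:\mathcal E\to[0,1]$ with $\sum_{e:\,t(e)=1}g(e)=1$ and, for every $i=1,\dots,n-1$ and $j\in\mathcal S$, $\sum_{e:\,t(e)=i,\,s'(e)=j}g(e)=\sum_{e:\,t(e)=i+1,\,s(e)=j}g(e)$. The projection $\mathcal Q$ maps $g$ to $\mathbf f=\mathcal Qg\in[0,1]^n$ with $f_i=\sum_{e:\,t(e)=i,\,x(e)=1}g(e)$. The trellis-wise relaxed polytope is $\mathcal P_{\mathcal T}(H)=\{g\in\mathcal T:\mathcal Qg\in\mathcal P(H)\}$. *)

(* Defs.v *)
From HB Require Import structures.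
From Stdlib Require Import Reals.
From mathcomp Require Import all_boot.
Set Implicit Arguments. Unset Strict Implicit. Unset Printing Implicit Defensive.
Local Open Scope R_scope.

Lemma Rplus_assoc' : associative Rplus.
Proof. by move=> a b c; rewrite Rplus_assoc. Qed.
Lemma Rmult_assoc' : associative Rmult.
Proof. by move=> a b c; rewrite Rmult_assoc. Qed.
HB.instance Definition _ := Monoid.isComLaw.Build R R0 Rplus Rplus_assoc' Rplus_comm Rplus_0_l.
HB.instance Definition _ := Monoid.isComLaw.Build R R1 Rmult Rmult_assoc' Rmult_comm Rmult_1_l.

Definition posb (x : R) : bool := if Rlt_dec 0 x then true else false.

(* A binary parity-check matrix with r rows and n columns: H j i = true iff entry is 1.
   Position i (0-based) stands for index i+1 of the paper. *)
Definition check_set (r n : nat) (H : 'I_r -> 'I_n -> bool) (j : 'I_r) : {set 'I_n} :=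
  [set i | H j i].

Definition codeword (r n : nat) (H : 'I_r -> 'I_n -> bool) (x : 'I_n -> bool) : Prop :=
  forall j : 'I_r, ~~ odd #|[set i | H j i && x i]|.

Definition in_LCP (n : nat) (I : {set 'I_n}) (f : 'I_n -> R) : Prop :=
  (forall i, 0 <= f i <= 1) /\
  forall Sset : {set 'I_n}, Sset \subset I -> odd #|Sset| ->
    (\big[Rplus/R0]_(i in Sset) f i - \big[Rplus/R0]_(i in I :\: Sset) f i
       <= INR #|Sset| - 1).

Definition in_relaxed_polytope (r n : nat) (H : 'I_r -> 'I_n -> bool) (f : 'I_n -> R) : Prop :=
  forall j : 'I_r, in_LCP (check_set H j) f.

(* P y s' x s = P(y, s' | x, s); P0 s = P(s_1 = s). *)
(* raw edge tuples (i, s, s', x); time index i is 0-based (i stands for i+1) *)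
Definition edge_tuple (n : nat) (S : finType) := ('I_n * S * S * bool)%type.
Definition et (n : nat) (S : finType) (e : edge_tuple n S) : 'I_n := e.1.1.1.
Definition es (n : nat) (S : finType) (e : edge_tuple n S) : S := e.1.1.2.
Definition es' (n : nat) (S : finType) (e : edge_tuple n S) : S := e.1.2.
Definition ex (n : nat) (S : finType) (e : edge_tuple n S) : bool := e.2.

Definition is_edge (n : nat) (S : finType) (Y : Type)
    (P : Y -> S -> bool -> S -> R) (P0 : S -> R) (y : 'I_n -> Y)
    (e : edge_tuple n S) : bool :=
  posb (P (y (et e)) (es' e) (ex e) (es e)) &&
  ((val (et e) == 0%N) ==> posb (P0 (es e))).

Definition Edge (n : nat) (S : finType) (Y : Type)
    (P : Y -> S -> bool -> S -> R) (P0 : S -> R) (y : 'I_n -> Y) : finType :=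
  {e : edge_tuple n S | is_edge P P0 y e}.

Definition branch_metric (n : nat) (S : finType) (Y : Type)
    (P : Y -> S -> bool -> S -> R) (P0 : S -> R) (y : 'I_n -> Y)
    (e : Edge P P0 y) : R :=
  let t := val e in
  if val (et t) == 0%N
  then (- ln (P (y (et t)) (es' t) (ex t) (es t) * P0 (es t)))
  else (- ln (P (y (et t)) (es' t) (ex t) (es t))).

Definition in_trellis_polytope (n : nat) (S : finType) (Y : Type)
    (P : Y -> S -> bool -> S -> R) (P0 : S -> R) (y : 'I_n -> Y)
    (g : Edge P P0 y -> R) : Prop :=
  (forall e, 0 <= g e <= 1) /\
  \big[Rplus/R0]_(e | val (et (val e)) == 0%N) g e = R1 /\
  forall (i : nat) (j : S), (i.+1 < n)%N ->
    \big[Rplus/R0]_(e | (val (et (val e)) == i) && (es' (val e) == j)) g e =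
    \big[Rplus/R0]_(e | (val (et (val e)) == i.+1) && (es (val e) == j)) g e.

Definition projQ (n : nat) (S : finType) (Y : Type)
    (P : Y -> S -> bool -> S -> R) (P0 : S -> R) (y : 'I_n -> Y)
    (g : Edge P P0 y -> R) (i : 'I_n) : R :=
  \big[Rplus/R0]_(e | (et (val e) == i) && ex (val e)) g e.

Definition in_PT (r n : nat) (H : 'I_r -> 'I_n -> bool) (S : finType) (Y : Type)
    (P : Y -> S -> bool -> S -> R) (P0 : S -> R) (y : 'I_n -> Y)
    (g : Edge P P0 y -> R) : Prop :=
  in_trellis_polytope g /\ in_relaxed_polytope H (projQ g).

Definition LP_cost (n : nat) (S : finType) (Y : Type)
    (P : Y -> S -> bool -> S -> R) (P0 : S -> R) (y : 'I_n -> Y)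
    (g : Edge P P0 y -> R) : R :=
  \big[Rplus/R0]_(e : Edge P P0 y) (g e * branch_metric e).

Definition LP_minimizer (r n : nat) (H : 'I_r -> 'I_n -> bool) (S : finType) (Y : Type)
    (P : Y -> S -> bool -> S -> R) (P0 : S -> R) (y : 'I_n -> Y)
    (g : Edge P P0 y -> R) : Prop :=
  in_PT H g /\ forall g' : Edge P P0 y -> R, in_PT H g' -> (LP_cost g <= LP_cost g').

Definition edge_path (n : nat) (S : finType) (Y : Type)
    (P : Y -> S -> bool -> S -> R) (P0 : S -> R) (y : 'I_n -> Y)
    (p : 'I_n -> Edge P P0 y) : Prop :=
  (forall i, et (val (p i)) = i) /\
  (forall i k : 'I_n, val k = (val i).+1 -> es' (val (p i)) = es (val (p k))).

Definition path_indicator (n : nat) (S : finType) (Y : Type)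
    (P : Y -> S -> bool -> S -> R) (P0 : S -> R) (y : 'I_n -> Y)
    (p : 'I_n -> Edge P P0 y) (e : Edge P P0 y) : R :=
  if e \in codom p then R1 else R0.

(* P(y_1^n, s_2^{n+1} | x_1^n, s_1) P(s_1); st k stands for s_{k+1}, k = 0..n *)
Definition joint_lik (n : nat) (S : finType) (Y : Type)
    (P : Y -> S -> bool -> S -> R) (P0 : S -> R) (y : 'I_n -> Y)
    (x : 'I_n -> bool) (st : 'I_n.+1 -> S) : R :=
  (\big[Rmult/R1]_(i < n) P (y i) (st (lift ord0 i)) (x i) (st (widen_ord (leqnSn n) i))
   * P0 (st ord0)).

(* Main.v *)
Require Import Defs.
From HB Require Import structures.
From Stdlib Require Import Reals Lra Classical ClassicalEpsilon FunctionalExtensionality.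
From mathcomp Require Import all_boot.
Set Implicit Arguments. Unset Strict Implicit. Unset Printing Implicit Defensive.
Local Open Scope R_scope.

Lemma sum_nonneg (I : Type) (s : seq I) (Pr : pred I) (F : I -> R) :
  (forall i, Pr i -> 0 <= F i) -> 0 <= \big[Rplus/R0]_(i <- s | Pr i) F i.
Proof.
move=> H; elim: s => [|a s IH]; first by rewrite big_nil; lra.
rewrite big_cons; case: ifP => // Pa; have := H a Pa; lra.
Qed.

Lemma prod_nonneg (I : Type) (s : seq I) (Pr : pred I) (F : I -> R) :
  (forall i, Pr i -> 0 <= F i) -> 0 <= \big[Rmult/R1]_(i <- s | Pr i) F i.
Proof.
move=> H; elim: s => [|a s IH]; first by rewrite big_nil; lra.
rewrite big_cons; case: ifP => // Pa; have := H a Pa; move=> h.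
by apply: Rmult_le_pos.
Qed.

Lemma prod_ln (I : Type) (s : seq I) (Pr : pred I) (F : I -> R) :
  (forall i, Pr i -> 0 < F i) ->
  0 < \big[Rmult/R1]_(i <- s | Pr i) F i /\
  ln (\big[Rmult/R1]_(i <- s | Pr i) F i) = \big[Rplus/R0]_(i <- s | Pr i) ln (F i).
Proof.
move=> H; elim: s => [|a s [IH1 IH2]]; first by rewrite !big_nil ln_1; split; lra.
rewrite !big_cons; case: ifP => // Pa; have h := H a Pa.
split; first by apply: Rmult_lt_0_compat.
by rewrite ln_mult // IH2.
Qed.

Lemma sum_const1 (I : finType) (A : {pred I}) :
  \big[Rplus/R0]_(i in A) R1 = INR #|A|.
Proof.
rewrite big_const; elim: #|A| => [|k IH]; first by [].
rewrite iterS.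
rewrite IH S_INR; lra.
Qed.

Lemma one_hot (T : finType) (Q : pred T) (g : T -> R) :
  (forall e, g e = R0 \/ g e = R1) ->
  \big[Rplus/R0]_(e | Q e) g e = R1 ->
  (exists e, Q e /\ g e = R1) /\
  (forall e1 e2, Q e1 -> Q e2 -> g e1 = R1 -> g e2 = R1 -> e1 = e2).
Proof.
move=> Hg Hs; have gnn : forall e, 0 <= g e by move=> e; case: (Hg e) => ->; lra.
split.
  apply: NNPP => Hn.
  have : \big[Rplus/R0]_(e | Q e) g e = R0.
    apply: big1 => e Qe; case: (Hg e) => // h1; exfalso; apply: Hn; by exists e.
  rewrite Hs; lra.
move=> e1 e2 Q1 Q2 g1 g2; case: (eqVneq e1 e2) => // ne.
move: Hs; rewrite (bigD1 e1) //= (bigD1 e2) /=; last by rewrite Q2 eq_sym ne.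
have := @sum_nonneg T (index_enum T) (fun i => (Q i && (i != e1)) && (i != e2)) g (fun i _ => gnn i).
rewrite g1 g2; lra.
Qed.

Lemma ind_sum_gen (I T : finType) (tm : T -> I) (q : I -> T) (i : I) (Q : pred T) :
  (forall k, tm (q k) = k) -> (forall e, Q e -> tm e = i) ->
  \big[Rplus/R0]_(e | Q e) (if e \in codom q then R1 else R0) = if Q (q i) then R1 else R0.
Proof.
move=> Htm HQ; case: ifP => Qi.
  rewrite (bigD1 (q i)) //= codom_f big1; first lra.
  move=> e /andP[Qe ne]; case: codomP => // [[k ek]]; subst e.
  by move: ne; rewrite -(HQ _ Qe) Htm eqxx.
apply: big1 => e Qe; case: codomP => // [[k ek]]; subst e.
have := HQ _ Qe; rewrite Htm => hi; subst i; by rewrite Qe in Qi.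
Qed.

Lemma ind_cost_gen (I T : finType) (tm : T -> I) (q : I -> T) (b : T -> R) :
  (forall k, tm (q k) = k) ->
  \big[Rplus/R0]_(e : T) ((if e \in codom q then R1 else R0) * b e) =
  \big[Rplus/R0]_(k : I) b (q k).
Proof.
move=> Htm.
have inj : injective q by move=> k1 k2 h; rewrite -(Htm k1) h Htm.
rewrite (eq_bigr (fun e => if e \in codom q then b e else R0)); last first.
  by move=> e _; case: ifP => _; lra.
rewrite -big_mkcond /=.
have -> : \big[Rplus/R0]_(k : I) b (q k) = \big[Rplus/R0]_(k in [set: I]) b (q k).
  by apply: eq_bigl => k; rewrite inE.
rewrite -(@big_imset _ _ _ _ _ q [set: I] b); last by move=> k1 k2 _ _; apply: inj.
apply: eq_bigl => e; apply/codomP/imsetP.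
  by move=> [k ->]; exists k; rewrite ?inE.
by move=> [k _ ->]; exists k.
Qed.

Lemma sum_ind (n : nat) (x : 'I_n -> bool) (A : {set 'I_n}) :
  \big[Rplus/R0]_(i in A) (if x i then R1 else R0) = INR #|[set i in A | x i]|.
Proof.
rewrite -big_mkcondr -sum_const1; apply: eq_bigl => i; by rewrite inE.
Qed.

Lemma lcp_codeword (n : nat) (I : {set 'I_n}) (x : 'I_n -> bool) :
  ~~ odd #|[set i in I | x i]| -> in_LCP I (fun i => if x i then R1 else R0).
Proof.
move=> Hev; split; first by move=> i; case: (x i); lra.
move=> Sset sSI oS; rewrite !sum_ind.
set a := #|[set i in Sset | x i]|.
set b := #|[set i in I :\: Sset | x i]|.
have aS : (a <= #|Sset|)%N by apply: subset_leq_card; apply/subsetP => i; rewrite inE => /andP[].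
have abc : (a + b)%N = #|[set i in I | x i]|.
  rewrite -(cardsID Sset [set i in I | x i]); congr (_ + _)%N; apply: eq_card => i;
    rewrite !inE; case iS: (i \in Sset); rewrite ?andbT ?andbF //=.
  by rewrite (subsetP sSI _ iS).
have key : (a + 1 <= #|Sset| + b)%N.
  move: aS; rewrite leq_eqVlt => /orP[/eqP aE|alt].
    have ob : odd b by move: Hev; rewrite -abc oddD aE oS; case: (odd b).
    have bp : (0 < b)%N by rewrite lt0n; apply/eqP => b0; rewrite b0 in ob.
    by rewrite aE leq_add2l.
  by rewrite addn1; apply: leq_trans (leq_addr _ _).
have := le_INR _ _ (elimT leP key); rewrite !plus_INR /=; lra.
Qed.

Lemma posbP x : posb x -> 0 < x.
Proof. by rewrite /posb; case: Rlt_dec. Qed.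

Lemma path_cost (n : nat) (S : finType) (Y : Type)
    (P : Y -> S -> bool -> S -> R) (P0 : S -> R) (y : 'I_n -> Y)
    (q : 'I_n -> Edge P P0 y) (st : 'I_n.+1 -> S) (x : 'I_n -> bool) :
  (forall i, et (val (q i)) = i) ->
  (forall i, st (widen_ord (leqnSn n) i) = es (val (q i))) ->
  (forall i, st (lift ord0 i) = es' (val (q i))) ->
  (forall i, x i = ex (val (q i))) -> (0 < n)%N ->
  0 < joint_lik P P0 y x st /\
  \big[Rplus/R0]_(i : 'I_n) branch_metric (q i) = - ln (joint_lik P P0 y x st).
Proof.
move=> Ht Hw Hl Hx n0.
set a := fun i : 'I_n => P (y i) (st (lift ord0 i)) (x i) (st (widen_ord (leqnSn n) i)).
have apos : forall i, 0 < a i.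
  move=> i; have := valP (q i); rewrite /is_edge /a Hw Hl Hx.
  by case/andP => /posbP; rewrite Ht.
pose i0 : 'I_n := Ordinal n0.
have w0 : widen_ord (leqnSn n) i0 = ord0 by apply: val_inj.
have p0pos : 0 < P0 (st ord0).
  have := valP (q i0); rewrite /is_edge -w0 Hw Ht /= => /andP[_ /posbP]; done.
have [pp pl] := @prod_ln _ (index_enum 'I_n) (fun _ => true) a (fun i _ => apos i).
have jl : joint_lik P P0 y x st = \big[Rmult/R1]_(i < n) a i * P0 (st ord0) by [].
split; first by rewrite jl; apply: Rmult_lt_0_compat.
pose c := fun i : 'I_n => if val i == 0%N then ln (P0 (st ord0)) else R0.
have bm : forall i, branch_metric (q i) = - (ln (a i) + c i).
  move=> i; rewrite /branch_metric /c /=.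
  have ea : P (y (et (val (q i)))) (es' (val (q i))) (ex (val (q i))) (es (val (q i))) = a i.
    by rewrite /a Ht Hw Hl Hx.
  rewrite ea Ht; case: eqP => [vi0|_].
    have wi : widen_ord (leqnSn n) i = ord0 by apply: val_inj.
    rewrite -Hw wi ln_mult //; lra.
  lra.
rewrite (eq_bigr _ (fun i _ => bm i)).
rewrite -(big_morph Ropp Ropp_plus_distr Ropp_0) big_split /=.
have -> : \big[Rplus/R0]_(i < n) c i = ln (P0 (st ord0)).
  rewrite (bigD1 i0) //= big1 /c /=; first lra.
  by move=> i ne; case: eqP => // h; move: ne; have -> : i = i0 by apply: val_inj.
by rewrite jl ln_mult // pl.
Qed.

Lemma posbT x : 0 < x -> posb x.
Proof. by rewrite /posb; case: Rlt_dec. Qed.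

Lemma lcp_int (n : nat) (I : {set 'I_n}) (x : 'I_n -> bool) :
  in_LCP I (fun i => if x i then R1 else R0) -> ~~ odd #|[set i in I | x i]|.
Proof.
move=> [_ H]; apply/negP => odd1.
have sub : [set i in I | x i] \subset I by apply/subsetP => i; rewrite inE => /andP[].
have := H _ sub odd1; rewrite !sum_ind.
have -> : [set i0 in [set i in I | x i] | x i0] = [set i in I | x i].
  by apply/setP => i; rewrite !inE; case: (i \in I); case: (x i).
have -> : [set i0 in I :\: [set i in I | x i] | x i0] = set0.
  by apply/setP => i; rewrite !inE; case: (i \in I); case: (x i).
rewrite cards0 /=; lra.
Qed.

Theorem theorem3
  (r n : nat) (H : 'I_r -> 'I_n -> bool)
  (S : finType) (Y : Type)
  (P : Y -> S -> bool -> S -> R) (P0 : S -> R)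
  (HPnn : forall (yy : Y) (s' : S) (x : bool) (s : S), Rle R0 (P yy s' x s))
  (HP0nn : forall s : S, Rle R0 (P0 s))
  (HP0sum : \big[Rplus/R0]_(s : S) P0 s = R1)
  (y : 'I_n -> Y)
  (gstar : Edge P P0 y -> R)
  (Hmin : LP_minimizer H gstar)
  (Hint : forall e, gstar e = R0 \/ gstar e = R1) :
  exists p : 'I_n -> Edge P P0 y,
    edge_path p /\
    (forall e, gstar e = path_indicator p e) /\
    codeword H (fun i => ex (val (p i))) /\
    exists st : 'I_n.+1 -> S,
      (forall i : 'I_n, st (widen_ord (leqnSn n) i) = es (val (p i))) /\
      (forall i : 'I_n, st (lift ord0 i) = es' (val (p i))) /\
      forall (x' : 'I_n -> bool) (st' : 'I_n.+1 -> S),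
        codeword H x' ->
        Rle (joint_lik P P0 y x' st') (joint_lik P P0 y (fun i => ex (val (p i))) st).
Proof.
case: Hmin => [[[Hb [Hlev0 Hflow]] HQ] Hopt].
have lev : forall i, (i < n)%N -> \big[Rplus/R0]_(e | val (et (val e)) == i) gstar e = R1.
  elim => [|i IH] hi; first done.
  rewrite (partition_big (fun e => es (val e)) predT) //.
  rewrite (eq_bigr (fun j => \big[Rplus/R0]_(e | (val (et (val e)) == i) && (es' (val e) == j)) gstar e)); last first.
    by move=> j _; rewrite Hflow.
  rewrite -(partition_big (fun e => es' (val e)) predT) //.
  by apply: IH; apply: ltnW.
have oh := fun i : 'I_n => one_hot Hint (lev i (ltn_ord i)).
have pex : forall i : 'I_n, exists e, (val (et (val e)) == i) /\ gstar e = R1.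
  by move=> i; case: (oh i).
pose p := fun i => proj1_sig (constructive_indefinite_description _ (pex i)).
have Hpt : forall i, et (val (p i)) = i.
  move=> i; have [/eqP h _] := proj2_sig (constructive_indefinite_description _ (pex i)).
  exact: val_inj.
have Hp1 : forall i, gstar (p i) = R1.
  by move=> i; have [_ h] := proj2_sig (constructive_indefinite_description _ (pex i)).
have Hgind : forall e, gstar e = path_indicator p e.
  move=> e; rewrite /path_indicator; case: ifP => [/codomP [k ->] // | nc].
  case: (Hint e) => // h1; exfalso.
  have ee : e = p (et (val e)).
    by apply: (proj2 (oh (et (val e)))) => //; rewrite ?Hpt.
  by move: nc; rewrite ee codom_f.
have sumQ : forall (i : 'I_n) (Q : pred (Edge P P0 y)), (forall e, Q e -> et (val e) = i) ->
    \big[Rplus/R0]_(e | Q e) gstar e = if Q (p i) then R1 else R0.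
  move=> i Q HQi; rewrite (eq_bigr _ (fun e _ => Hgind e)).
  exact: (ind_sum_gen (tm := fun e => et (val e))).
have Hpath : edge_path p.
  split => // i k hk.
  have hi : ((val i).+1 < n)%N by rewrite -hk ltn_ord.
  have := Hflow (val i) (es' (val (p i))) hi.
  rewrite (sumQ i) /=; last by move=> e /andP[/eqP h _]; apply: val_inj.
  rewrite (sumQ k) /=; last by move=> e /andP[/eqP h _]; apply: val_inj; exact: (etrans h (esym hk)).
  rewrite !Hpt eqxx /= hk eqxx /=.
  by rewrite eqxx /=; case: eqP => [->|_] // h; exfalso; lra.
have n0 : (0 < n)%N.
  have [[e [_ _]] _] := one_hot Hint Hlev0.
  exact: (leq_ltn_trans (leq0n _) (ltn_ord (et (val e)))).
have cw : codeword H (fun i => ex (val (p i))).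
  have fe : projQ gstar = (fun i => if ex (val (p i)) then R1 else R0).
    apply: functional_extensionality => i; rewrite /projQ (sumQ i) ?Hpt ?eqxx //.
    by move=> e /andP[/eqP h _].
  move=> j; have := HQ j; rewrite fe => /lcp_int.
  by have -> : [set i in check_set H j | ex (val (p i))] = [set i | H j i && ex (val (p i))] by apply/setP => i; rewrite !inE.
have cwgen : forall x' : 'I_n -> bool, codeword H x' -> in_relaxed_polytope H (fun i => if x' i then R1 else R0).
  move=> x' cw' j; apply: lcp_codeword.
  by have -> : [set i in check_set H j | x' i] = [set i | H j i && x' i] by apply/setP => i; rewrite !inE.
have ilt : (n.-1 < n)%N by rewrite ltn_predL.
pose ilast : 'I_n := Ordinal ilt.
pose st := fun k : 'I_n.+1 => if (val k < n)%N then es (val (p (insubd ilast (val k)))) else es' (val (p ilast)).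
have Hw : forall i : 'I_n, st (widen_ord (leqnSn n) i) = es (val (p i)).
  move=> i; rewrite /st /= ltn_ord.
  by have -> : insubd ilast (val i) = i by apply: val_inj; rewrite val_insubd ltn_ord.
have Hl : forall i : 'I_n, st (lift ord0 i) = es' (val (p i)).
  move=> i; rewrite /st (_ : val (lift ord0 i) = (val i).+1); last exact: lift0.
  case: ifP => h.
    have [_ hc] := Hpath.
    by rewrite (hc i (insubd ilast (val i).+1)) // val_insubd h.
  congr (es' (val (p _))); apply: val_inj => /=.
  have e1 : (val i).+1 = n by apply/eqP; rewrite eqn_leq ltn_ord leqNgt h.
  by apply: succn_inj; rewrite e1 prednK.
exists p; split => //; split => //; split => //.
exists st; split => //; split => //.
move=> x' st' cw'.
have [Lpos Lcost] := @path_cost n S Y P P0 y p st (fun i => ex (val (p i))) Hpt Hw Hl (fun i => erefl) n0.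
set L' := joint_lik P P0 y x' st'.
set Ls := joint_lik P P0 y (fun i => ex (val (p i))) st.
rewrite -/Ls in Lpos Lcost.
case: (Rle_or_lt L' 0) => hL'; first lra.
have apos : forall i : 'I_n, 0 < P (y i) (st' (lift ord0 i)) (x' i) (st' (widen_ord (leqnSn n) i)).
  move=> i; case: (Rle_or_lt (P (y i) (st' (lift ord0 i)) (x' i) (st' (widen_ord (leqnSn n) i))) 0) => // h.
  have h0 : P (y i) (st' (lift ord0 i)) (x' i) (st' (widen_ord (leqnSn n) i)) = 0 by have := HPnn (y i) (st' (lift ord0 i)) (x' i) (st' (widen_ord (leqnSn n) i)); lra.
  move: hL'; rewrite /L' /joint_lik (bigD1 i) //= h0 Rmult_0_l Rmult_0_l; lra.
have p0pos : 0 < P0 (st' ord0).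
  case: (Rle_or_lt (P0 (st' ord0)) 0) => // h.
  have h0 : P0 (st' ord0) = 0 by have := HP0nn (st' ord0); lra.
  move: hL'; rewrite /L' /joint_lik h0 Rmult_0_r; lra.
have qe : forall i : 'I_n, is_edge P P0 y (i, st' (widen_ord (leqnSn n) i), st' (lift ord0 i), x' i).
  move=> i; rewrite /is_edge /= posbT //=; apply/implyP => /eqP vi.
  have -> : widen_ord (leqnSn n) i = ord0 by apply: val_inj.
  exact: posbT.
pose q := fun i : 'I_n => (exist (fun e => is_edge P P0 y e) _ (qe i) : Edge P P0 y).
have [_ Lcost'] := @path_cost n S Y P P0 y q st' x' (fun i => erefl) (fun i => erefl) (fun i => erefl) (fun i => erefl) n0.
rewrite -/L' in Lcost'.
have Hin : in_PT H (path_indicator q).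
  split; last first.
    have -> : projQ (path_indicator q) = (fun i => if x' i then R1 else R0); last exact: cwgen.
    apply: functional_extensionality => i; rewrite /projQ /path_indicator.
    rewrite (ind_sum_gen (tm := fun e : Edge P P0 y => et (val e)) (q := q) (i := i)) //=.
      by rewrite eqxx.
    by move=> e /andP[/eqP h _].
  split; first by move=> e; rewrite /path_indicator; case: ifP => _; lra.
  split.
    rewrite /path_indicator (ind_sum_gen (tm := fun e : Edge P P0 y => et (val e)) (q := q) (i := Ordinal n0)) //=.
    by move=> e /eqP h; apply: val_inj.
  move=> i j hi; rewrite /path_indicator.
  rewrite (ind_sum_gen (tm := fun e : Edge P P0 y => et (val e)) (q := q) (i := Ordinal (ltnW hi))) //=; last first.
    by move=> e /andP[/eqP h _]; apply: val_inj.
  rewrite (ind_sum_gen (tm := fun e : Edge P P0 y => et (val e)) (q := q) (i := Ordinal hi)) //=; last first.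
    by move=> e /andP[/eqP h _]; apply: val_inj.
  rewrite !eqxx /=.
  have -> : lift ord0 (Ordinal (ltnW hi)) = widen_ord (leqnSn n) (Ordinal hi) by apply: val_inj.
  by [].
have := Hopt _ Hin.
have -> : LP_cost gstar = - ln Ls.
  rewrite /LP_cost -Lcost (eq_bigr _ (fun e _ => f_equal (fun z => z * branch_metric e) (Hgind e))).
  exact: (ind_cost_gen (tm := fun e : Edge P P0 y => et (val e))).
have -> : LP_cost (path_indicator q) = - ln L'.
  rewrite /LP_cost -Lcost'.
  exact: (ind_cost_gen (tm := fun e : Edge P P0 y => et (val e))).
move=> hln; case: (Rle_or_lt L' Ls) => // hlt.
have := ln_increasing _ _ Lpos hlt; lra.
Qed.
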